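(* Let $\theta<\kappa$ be a regular cardinal and let $I$ be a weakly $\theta$-saturated, $\theta$-indecomposable ideal on the cardinal $\kappa$. If $\delta$ is an ordinal of cofinality $\theta$, then every function $f:\kappa\to\delta$ is bounded below $\delta$ almost everywhere: there is $\beta<\delta$ with $\{\alpha<\kappa:f(\alpha)\geq\beta\}\in I$.
   Context: By an ideal on a cardinal $\kappa$ we mean a proper ideal on $\kappa$ containing all bounded subsets of $\kappa$. $I$ is weakly $\theta$-saturated if there is no partition of $\kappa$ into $\theta$ pairwise disjoint sets not in $I$. $I$ is $\theta$-indecomposable if whenever $\langle A_i:i<\theta\rangle$ are subsets of $\kappa$ with $\bigcup_{i<\theta}A_i\notin I$, there is $w\subseteq\theta$ with $|w|<\theta$ and $\bigcup_{i\in w}A_i\notin I$. *)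

(* Defs.v *)
(* An ordinal is (the order type of) a well-ordered type; a cardinal is an
   initial ordinal; sets are predicates; cardinality comparison is via
   injections / bijections. *)
From Stdlib Require Import Classical.

Record wordered := WOrdered {
  wo_car :> Type;
  wo_lt : wo_car -> wo_car -> Prop;
  wo_wf : well_founded wo_lt;
  wo_trans : forall x y z, wo_lt x y -> wo_lt y z -> wo_lt x z;
  wo_total : forall x y, wo_lt x y \/ x = y \/ wo_lt y x
}.

Arguments wo_lt {w} _ _.

Definition card_le (A B : Type) : Prop :=
  exists f : A -> B, forall x y, f x = f y -> x = y.

Definition card_eq (A B : Type) : Prop :=
  exists f : A -> B, (forall x y, f x = f y -> x = y) /\ (forall b, exists a, f a = b).

Definition card_lt (A B : Type) : Prop := card_le A B /\ ~ card_le B A.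

Definition below {O : wordered} (x : O) : Type := { y : O | wo_lt y x }.

Definition is_cardinal (K : wordered) : Prop :=
  forall x : K, ~ card_le K (below x).

Definition cofinal {O : wordered} (X : O -> Prop) : Prop :=
  forall x : O, exists y, X y /\ (x = y \/ wo_lt x y).

Definition has_cof (O : wordered) (T : Type) : Prop :=
  (exists X : O -> Prop, cofinal X /\ card_eq { y | X y } T) /\
  (forall X : O -> Prop, cofinal X -> card_le T { y | X y }).

Definition is_regular (K : wordered) : Prop :=
  is_cardinal K /\ card_le nat K /\ has_cof K K.

Definition is_ideal (K : wordered) (I : (K -> Prop) -> Prop) : Prop :=
  ~ I (fun _ => True) /\
  (forall A B : K -> Prop, I B -> (forall x, A x -> B x) -> I A) /\
  (forall A B : K -> Prop, I A -> I B -> I (fun x => A x \/ B x)) /\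
  (forall (b : K) (A : K -> Prop), (forall y, A y -> wo_lt y b) -> I A).

Definition weakly_saturated (T : Type) (K : wordered)
    (I : (K -> Prop) -> Prop) : Prop :=
  ~ exists P : T -> K -> Prop,
      (forall i j x, P i x -> P j x -> i = j) /\
      (forall x, exists i, P i x) /\
      (forall i, ~ I (P i)).

Definition indecomposable (T : Type) (K : wordered)
    (I : (K -> Prop) -> Prop) : Prop :=
  forall A : T -> K -> Prop,
    ~ I (fun x => exists i, A i x) ->
    exists w : T -> Prop, card_lt { i | w i } T /\
      ~ I (fun x => exists i, w i /\ A i x).

(* Main.v *)
Require Import Defs.
From Stdlib Require Import Classical ClassicalEpsilon FunctionalExtensionality ProofIrrelevance.

Lemma wo_irrefl (O : wordered) (x : O) : ~ wo_lt x x.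
Proof.
  induction (wo_wf O x) as [x _ IH]. intro H. exact (IH x H H).
Qed.

Lemma card_le_trans (A B C : Type) : card_le A B -> card_le B C -> card_le A C.
Proof.
  intros [f Hf] [g Hg]. exists (fun x => g (f x)). intros x y H. auto.
Qed.

Lemma small_bounded (theta delta : wordered) (J : Type) (gg : J -> delta) :
  has_cof delta theta -> ~ card_le theta J ->
  exists y : delta, forall j, gg j = y \/ wo_lt (gg j) y.
Proof.
  intros [_ Hmin] HJ.
  apply NNPP. intro Hn.
  set (T := fun z : delta => exists j, gg j = z).
  assert (HT : cofinal T).
  { intro x. apply NNPP. intro Hx. apply Hn. exists x. intro j.
    destruct (wo_total _ (gg j) x) as [H|[H|H]]; auto.
    exfalso. apply Hx. exists (gg j). split; [exists j; reflexivity|]. auto. }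
  apply HJ. apply (card_le_trans _ _ _ (Hmin T HT)).
  exists (fun s : {z | T z} => proj1_sig (constructive_indefinite_description _ (proj2_sig s))).
  intros [x Hx] [y Hy]. simpl.
  destruct (constructive_indefinite_description _ Hx) as [j1 E1].
  destruct (constructive_indefinite_description _ Hy) as [j2 E2]. simpl.
  intro E. subst. apply subset_eq_compat. reflexivity.
Qed.

Theorem corollary2p3 (theta kappa delta : wordered)
    (I : (kappa -> Prop) -> Prop) :
  is_regular theta ->
  is_cardinal kappa ->
  card_lt theta kappa ->
  is_ideal kappa I ->
  weakly_saturated theta kappa I ->
  indecomposable theta kappa I ->
  has_cof delta theta ->
  forall f : kappa -> delta,
    exists beta : delta, I (fun alpha => f alpha = beta \/ wo_lt beta (f alpha)).
Proof.
  intros [Hthc [[n _] _]] _ [[e _] _] [Hprop [Hmono [Hunion Hbdd]]] Hsat Hind Hcof f.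
  pose (i0 := n 0).
  pose (d0 := f (e i0)).
  apply NNPP. intro Hneg.
  set (U := fun (beta : delta) alpha => f alpha = beta \/ wo_lt beta (f alpha)).
  assert (HnU : forall beta, ~ I (U beta)).
  { intros beta HI. apply Hneg. exists beta. exact HI. }
  assert (HK : forall beta, exists x, ~ I (fun alpha => U beta alpha /\ wo_lt (f alpha) x)).
  { intro beta.
    destruct Hcof as [[X [HXc [g [Hginj Hgsurj]]]] Hmin].
    set (A := fun (i : theta) alpha => exists y : {y | X y}, g y = i /\ U beta alpha /\
                 (f alpha = proj1_sig y \/ wo_lt (f alpha) (proj1_sig y))).
    assert (HA : ~ I (fun alpha => exists i, A i alpha)).
    { intro HI. apply (HnU beta). apply (Hmono _ _ HI).
      intros alpha Ha. destruct (HXc (f alpha)) as [y [Hy Hle]].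
      exists (g (exist _ y Hy)). exists (exist _ y Hy). simpl. auto. }
    destruct (Hind A HA) as [w [[_ Hw] HIw]].
    assert (Hb : exists x, forall y : {y | X y}, w (g y) -> wo_lt (proj1_sig y) x).
    { destruct (small_bounded theta delta {y : {y | X y} | w (g y)}
          (fun s => proj1_sig (proj1_sig s)) (conj (ex_intro _ X (conj HXc (ex_intro _ g (conj Hginj Hgsurj)))) Hmin)) as [x0 Hx0].
      { intro Hc. apply Hw. apply (card_le_trans _ _ _ Hc).
        exists (fun s => exist (fun i => w i) (g (proj1_sig s)) (proj2_sig s)).
        intros [a Ha] [b Hb'] E. simpl in E. injection E as E.
        apply Hginj in E. subst. f_equal. apply proof_irrelevance. }
      (* get strict bound: x0 might be attained; use a successor-free trick *)
      destruct (HXc x0) as [y1 [Hy1 _]].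
      apply NNPP. intro Hno.
      assert (Hall : forall x, exists y : {y | X y}, w (g y) /\ ~ wo_lt (proj1_sig y) x).
      { intro x. apply NNPP. intro H. apply Hno. exists x. intros y Hy.
        apply NNPP. intro H2. apply H. exists y. auto. }
      clear y1 Hy1.
      apply Hw.
      set (S := fun z : delta => exists y : {y | X y}, w (g y) /\ proj1_sig y = z).
      assert (HS : cofinal S).
      { intro x. destruct (Hall x) as [y [Hwy Hy]]. exists (proj1_sig y).
        split. exists y; auto.
        destruct (wo_total _ x (proj1_sig y)) as [H|[H|H]]; auto. contradiction. }
      apply (card_le_trans _ _ _ (Hmin S HS)).
      exists (fun s : {z | S z} =>
        let (y, Hy) := constructive_indefinite_description _ (proj2_sig s) in
        exist (fun i => w i) (g y) (proj1 Hy)).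
      intros [a Ha] [b Hb'].
      simpl.
      destruct (constructive_indefinite_description _ Ha) as [ya [Hwa Ea]].
      destruct (constructive_indefinite_description _ Hb') as [yb [Hwb Eb]].
      intro E. injection E as E. apply Hginj in E. subst.
      apply subset_eq_compat. reflexivity. }
    destruct Hb as [x Hx]. exists x. intro HI. apply HIw. apply (Hmono _ _ HI).
    intros alpha [i [Hwi [y [Egy [HU Hle]]]]]. split; auto.
    subst i. specialize (Hx y Hwi).
    destruct Hle as [E|L]. rewrite E; auto. apply (wo_trans _ _ _ _ L Hx). }
  pose (h := fun beta => proj1_sig (constructive_indefinite_description _ (HK beta))).
  assert (Hh : forall beta, ~ I (fun alpha => U beta alpha /\ wo_lt (f alpha) (h beta))).
  { intro beta. unfold h. destruct (constructive_indefinite_description _ (HK beta)); auto. }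
  pose (F := fun (i : theta) (rec : forall j, wo_lt j i -> delta) =>
    epsilon (inhabits d0) (fun y => forall j (H : wo_lt j i),
       h (rec j H) = y \/ wo_lt (h (rec j H)) y)).
  pose (b := Fix (wo_wf theta) (fun _ => delta) F).
  assert (Hb : forall i j, wo_lt j i -> h (b j) = b i \/ wo_lt (h (b j)) (b i)).
  { intros i.
    assert (Eq : b i = F i (fun j _ => b j)).
    { unfold b. apply (Fix_eq (wo_wf theta) (fun _ => wo_car delta) F). intros x f1 f2 Hf.
      assert (f1 = f2) by (apply functional_extensionality_dep; intro;
                          apply functional_extensionality; intro; auto).
      subst. reflexivity. }
    rewrite Eq. unfold F.
    apply (epsilon_spec (inhabits d0) (fun y => forall j (H : wo_lt j i),
       h (b j) = y \/ wo_lt (h (b j)) y)).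
    destruct (small_bounded theta delta (below i) (fun s => h (b (proj1_sig s))) Hcof) as [y Hy].
    { intro Hc. exact (Hthc i Hc). }
    exists y. intros j H. exact (Hy (exist _ j H)). }
  pose (core := fun (i : theta) alpha => U (b i) alpha /\ forall j, wo_lt i j -> wo_lt (f alpha) (b j)).
  apply Hsat.
  exists (fun i alpha => core i alpha \/ (i = i0 /\ ~ exists j, core j alpha)).
  split; [|split].
  - intros i j alpha [Ci|[Ei Ni]] [Cj|[Ej Nj]].
    + destruct (wo_total _ i j) as [H|[H|H]]; auto; exfalso.
      * destruct Ci as [_ Ci]. destruct Cj as [[Uj|Uj] _]; specialize (Ci j H).
        -- rewrite Uj in Ci. exact (wo_irrefl _ _ Ci).
        -- exact (wo_irrefl _ _ (wo_trans _ _ _ _ Uj Ci)).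
      * destruct Cj as [_ Cj]. destruct Ci as [[Ui|Ui] _]; specialize (Cj i H).
        -- rewrite Ui in Cj. exact (wo_irrefl _ _ Cj).
        -- exact (wo_irrefl _ _ (wo_trans _ _ _ _ Ui Cj)).
    + exfalso. apply Nj. exists i. exact Ci.
    + exfalso. apply Ni. exists j. exact Cj.
    + congruence.
  - intro alpha. destruct (classic (exists j, core j alpha)) as [[j Hj]|Hn].
    + exists j. left. exact Hj.
    + exists i0. right. auto.
  - intros i HI. apply (Hh (b i)). apply (Hmono _ _ HI).
    intros alpha [HU Hlt]. left. split; auto.
    intros j Hij. destruct (Hb j i Hij) as [E|L].
    + rewrite <- E. exact Hlt.
    + exact (wo_trans _ _ _ _ Hlt L).
Qed.
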